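(* For every tree embedding $(\mathcal T,\mathcal M,y)$ in the support of $\mathcal D$, the set $Z_{\mathcal T}=\bigcup\{Z_F : F\subseteq E(H),\ |F|=\ell,\ \mathcal T\text{ is good for }F\}$ satisfies $|Z_{\mathcal T}|\le q\cdot n^{2\ell}\cdot 2^{2\ell\beta}$.
   Context: Standing setup. $G=(V,E)$ is an undirected graph with $n=|V|$, demand-pairs $(S_i,T_i)$, $i\in[q]$, of subsets of $V$. $\ell\ge1$ is an integer and $E_\ell\subseteq E$ an edge set such that in $(V,E_\ell)$ every $(S_i,T_i)$ is $\ell$-edge-connected. $x:E\to[0,1]$ satisfies $x_e=1$ for $e\in E_\ell$ and $\sum_{e\in\delta_G(X)}x_e\ge \ell+1$ for every $i\in[q]$ and every $X$ with $T_i\subseteq X\subseteq V\setminus S_i$. $\beta\ge1$ is a real. $\mathsf{LARGE}=\{e: x_e\ge 1/(4\ell\beta)\}$ and $H=(V,\mathsf{LARGE})$. Capacities: $\tilde x_e=1/(4\ell\beta)$ if $e\in\mathsf{LARGE}$; $\tilde x_e=0$ if $x_e<\frac{1}{2n^2}\cdot\frac1{4\ell\beta}$; $\tilde x_e=x_e$ otherwise. A tree embedding $(\mathcal T,\mathcal M,y)$ of $(G,\tilde x)$: $\mathcal T$ is a tree; $\mathcal M$ maps nodes of $\mathcal T$ to vertices of $G$ and is a bijection between leaves of $\mathcal T$ and $V$ (a vertex set of $G$ is identified with the corresponding leaf set); each tree edge $f=(u,v)$ is mapped to a path $\mathcal M(f)$ in $G$ between $\mathcal M(u)$ and $\mathcal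 M(v)$; $y(f)=\tilde x(\delta_G(X))$ where $(X,V\setminus X)$ is the leaf partition induced by $\mathcal T-f$. $\mathcal M^{-1}(e)=\{f: e\in\mathcal M(f)\}$, $\mathcal M^{-1}(F)=\bigcup_{e\in F}\mathcal M^{-1}(e)$. $\mathcal D$ is a probability distribution over tree embeddings of $(G,\tilde x)$ with $\mathbb{E}_{\mathcal T\sim\mathcal D}[\sum_{f\in\mathcal M^{-1}(e)}y(f)]\le\beta\,\tilde x_e$ for every $e\in E$, and for every tree in its support and all disjoint $A,B\subseteq V$, the maximum $A$–$B$ flow in $\mathcal T$ under $y$ is at least the maximum $A$–$B$ flow in $G$ under $\tilde x$. A tree embedding is good for $F\subseteq E(H)$ if $\sum_{f\in\mathcal M^{-1}(F)}y(f)\le1/2$. Components: $\mathbb Q^F$ is the set of vertex sets of connected components of $(V,E(H)\setminus F)$; for nonempty $S\subseteq V$, $Q_S$ is the union of those components meeting $S$. A component $Q\in\mathbb Q^F$ is shattered (w.r.t. $\mathcal T$) if its leaves are not all in one connected component of $\mathcal T$ with the edges $\mathcal M^{-1}(F)$ removed. $\mathbb U^F_{\mathcal T}$ is the set of all partitions $(A',B')$ (parts may be empty) of the set of shattered components, and $Z_F=\{(A'\cup Q_{S_i},\,B'\cup Q_{T_i}) : (A',B')\in\mathbb U^F_{\mathcal T},\ i\in[q],\ Q_{S_i}\cap Q_{T_i}=\emptyset\}$. *)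

(* Defs.v *)
From HB Require Import structures.
From mathcomp Require Import all_boot all_order all_algebra.
From mathcomp Require Import reals exp.
From Stdlib Require List.

Set Implicit Arguments.
Unset Strict Implicit.
Unset Printing Implicit Defensive.

Import Order.TTheory GRing.Theory Num.Theory.
Local Open Scope ring_scope.

(* ---------- generic undirected simple graphs on a finType ----------------
   A graph is given by its vertex type N and edge set Ed : {set {set N}},
   each edge being a 2-element vertex set. *)

Definition adj (N : finType) (Ed : {set {set N}}) : rel N :=
  fun u w => [set u; w] \in Ed.

Definition ucut (N : finType) (Ed : {set {set N}}) (X : {set N}) : {set {set N}} :=
  [set e in Ed | #|e :&: X| == 1%N].

Definition components (N : finType) (Ed : {set {set N}}) : {set {set N}} :=
  [set [set w | connect (adj Ed) u w] | u : N].

Definition compQ (N : finType) (Ed : {set {set N}}) (S : {set N}) : {set N} :=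
  \bigcup_(Q in components Ed | Q :&: S != set0) Q.

Definition ell_edge_conn (N : finType) (Ed : {set {set N}}) (S T : {set N})
  (l : nat) : Prop :=
  forall X : {set N}, T \subset X -> X \subset ~: S -> (l <= #|ucut Ed X|)%N.

Definition walk_edges (N : finType) (s : seq N) : seq {set N} :=
  if s is a :: r then pairmap (fun u w => [set u; w]) a r else [::].

Definition is_path_between (N : finType) (Ed : {set {set N}}) (s : seq N)
  (a b : N) : Prop :=
  match s with
  | [::] => False
  | s0 :: r => [/\ s0 = a, last s0 r = b, uniq s & path (adj Ed) s0 r]
  end.

Definition tdeg (N : finType) (tE : {set {set N}}) (t : N) : nat :=
  #|[set f in tE | t \in f]|.

Definition is_leaf (N : finType) (tE : {set {set N}}) (t : N) : bool :=
  (tdeg tE t <= 1)%N.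

(* a tree: simple graph, connected, and acyclic (every edge is a bridge) *)
Definition is_tree (N : finType) (tE : {set {set N}}) : Prop :=
  [/\ forall f, f \in tE -> #|f| = 2%N,
      forall a b : N, connect (adj tE) a b &
      forall f (a b : N), f \in tE -> f = [set a; b] ->
        ~~ connect (adj (tE :\ f)) a b].

Section Flow.
Variable R : realType.

Definition is_flow (N : finType) (Ed : {set {set N}}) (cap : {set N} -> R)
  (A B : {set N}) (g : N -> N -> R) : Prop :=
  [/\ forall u w, g u w = - g w u,
      forall u w, [set u; w] \notin Ed -> g u w = 0,
      forall u w, `|g u w| <= cap [set u; w] &
      forall w, w \notin A :|: B -> \sum_(u : N) g w u = 0].

Definition flow_value (N : finType) (A : {set N}) (g : N -> N -> R) : R :=
  \sum_(a in A) \sum_(u : N) g a u.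

Definition xcut (N : finType) (Ed : {set {set N}}) (c : {set N} -> R)
  (X : {set N}) : R := \sum_(e in ucut Ed X) c e.
End Flow.

Record tree_emb (V : finType) := TreeEmb {
  tnode : finType;
  tedges : {set {set tnode}};
  tmap : tnode -> V;                     (* M on nodes *)
  tpath : {set tnode} -> seq V           (* M on tree edges: a path in G *)
}.

Section TreeEmb.
Variable R : realType.
Variable V : finType.
Variable E : {set {set V}}.

Definition tleaf (T : tree_emb V) (t : tnode T) : bool := is_leaf (tedges T) t.

Definition leaves_of (T : tree_emb V) (A : {set V}) : {set tnode T} :=
  [set t : tnode T | tleaf t && (tmap t \in A)].

(* one side X of the leaf partition induced by T - f *)
Definition leaf_side (T : tree_emb V) (f : {set tnode T}) : {set V} :=
  match [pick a in f] with
  | Some a => [set v | [exists t : tnode T, [&& tleaf t, tmap t == v &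
                         connect (adj (tedges T :\ f)) a t]]]
  | None => set0
  end.

Definition ty (xt : {set V} -> R) (T : tree_emb V) (f : {set tnode T}) : R :=
  xcut E xt (leaf_side f).

(* (T,M,y) is a tree embedding of (G,xt) (y is determined by ty) *)
Definition is_tree_emb (T : tree_emb V) : Prop :=
  [/\ is_tree (tedges T),
      forall v : V, exists t : tnode T, tleaf t /\ tmap t = v,
      forall t1 t2 : tnode T, tleaf t1 -> tleaf t2 ->
        tmap t1 = tmap t2 -> t1 = t2 &
      forall f, f \in tedges T -> exists a b : tnode T,
        f = [set a; b] /\ is_path_between E (tpath f) (tmap a) (tmap b)].

Definition Minv1 (T : tree_emb V) (e : {set V}) : {set {set tnode T}} :=
  [set f in tedges T | e \in walk_edges (tpath f)].
Definition MinvF (T : tree_emb V) (F : {set {set V}}) : {set {set tnode T}} :=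
  \bigcup_(e in F) Minv1 T e.

Definition flow_dominates (xt : {set V} -> R) (T : tree_emb V) : Prop :=
  forall A B : {set V}, [disjoint A & B] ->
  forall g, is_flow E xt A B g ->
  exists h, is_flow (tedges T) (ty xt (T:=T)) (leaves_of T A) (leaves_of T B) h
            /\ flow_value A g <= flow_value (leaves_of T A) h.

(* D: finitely supported probability distribution over tree embeddings of
   (G, xt), given as a list of (probability, tree embedding) pairs *)
Definition good_distribution (beta : R) (xt : {set V} -> R)
  (D : seq (R * tree_emb V)) : Prop :=
  [/\ forall p, List.In p D -> 0 <= p.1,
      \sum_(p <- D) p.1 = 1,
      forall p, List.In p D -> is_tree_emb p.2,
      forall e, e \in E ->
        \sum_(p <- D) p.1 * (\sum_(f in Minv1 p.2 e) ty xt f) <= beta * xt e &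
      forall p, List.In p D -> 0 < p.1 -> flow_dominates xt p.2].

Definition LARGE (x : {set V} -> R) (l : nat) (beta : R) : {set {set V}} :=
  [set e in E | 1 / (4 * l%:R * beta) <= x e].

Definition xtilde (x : {set V} -> R) (l : nat) (beta : R) : {set V} -> R :=
  fun e => if e \in LARGE x l beta then 1 / (4 * l%:R * beta)
           else if x e < 1 / (2 * (#|V|%:R) ^+ 2) * (1 / (4 * l%:R * beta))
                then 0 else x e.

Definition good_for (xt : {set V} -> R) (T : tree_emb V) (F : {set {set V}}) : bool :=
  \sum_(f in MinvF T F) ty xt f <= 1 / 2.

Definition shattered (T : tree_emb V) (F : {set {set V}}) (Q : {set V}) : bool :=
  [exists t1 : tnode T, exists t2 : tnode T, [&& tleaf t1, tleaf t2, tmap t1 \in Q, tmap t2 \in Q &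
     ~~ connect (adj (tedges T :\: MinvF T F)) t1 t2]].

Definition shattered_comps (EH : {set {set V}}) (T : tree_emb V)
  (F : {set {set V}}) : {set {set V}} :=
  [set Q in components (EH :\: F) | shattered T F Q].

(* Z_F; a partition (A',B') of the shattered components is encoded by the
   subset P of shattered components going to A' (A' = cover P) *)
Definition ZF (EH : {set {set V}}) (q : nat) (S Tt : 'I_q -> {set V})
  (T : tree_emb V) (F : {set {set V}}) : {set {set V} * {set V}} :=
  let Sh := shattered_comps EH T F in
  [set (cover P :|: compQ (EH :\: F) (S i), cover (Sh :\: P) :|: compQ (EH :\: F) (Tt i))
   | P in powerset Sh,
     i in [set i : 'I_q | compQ (EH :\: F) (S i) :&: compQ (EH :\: F) (Tt i) == set0]].

Definition ZT (xt : {set V} -> R) (EH : {set {set V}}) (l q : nat)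
  (S Tt : 'I_q -> {set V}) (T : tree_emb V) : {set {set V} * {set V}} :=
  \bigcup_(F in powerset EH | (#|F| == l) && good_for xt T F) ZF EH S Tt T F.

End TreeEmb.

(* Main.v *)
Require Import Defs.
From HB Require Import structures.
From mathcomp Require Import all_boot all_order all_algebra.
From mathcomp Require Import reals exp ring.
From Stdlib Require List.
Import Order.TTheory GRing.Theory Num.Theory.

Section Helpers.
Local Set Implicit Arguments.
Local Unset Strict Implicit.

Lemma card_bigcup_le (I T : finType) (P : pred I) (F : I -> {set T}) :
  (#|\bigcup_(i | P i) F i| <= \sum_(i | P i) #|F i|)%N.
Proof.
elim/big_rec2: _ => [|i B s _ IH]; first by rewrite cards0.
rewrite cardsU (leq_trans (leq_subr _ _)) // leq_add2l //.
Qed.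

Lemma card_imset2_le (A B C : finType) (f : A -> B -> C) (X : {set A}) (Y : {set B}) :
  (#|f @2: (X, Y)| <= #|X| * #|Y|)%N.
Proof. by rewrite curry_imset2X -cardsX leq_imset_card. Qed.

Lemma ffact_le_exp n k : (n ^_ k <= n ^ k)%N.
Proof.
elim: k n => [|k IH] n; first by rewrite ffactn0 expn0.
rewrite ffactnS expnS leq_mul // (leq_trans (IH _)) //.
case: k {IH} => [|k]; first by rewrite !expn0.
by rewrite leq_exp2r // leq_pred.
Qed.

Lemma bin_le_exp n k : ('C(n, k) <= n ^ k)%N.
Proof.
apply: leq_trans (ffact_le_exp n k).
by rewrite -bin_ffact leq_pmulr // fact_gt0.
Qed.

Lemma adj_sym (N : finType) (Ed : {set {set N}}) : symmetric (adj Ed).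
Proof. by move=> u w; rewrite /adj setUC. Qed.

Lemma tree_split (N : finType) (tE M : {set {set N}}) x p :
  path (adj tE) x p -> uniq (x :: p) -> ~~ connect (adj (tE :\: M)) x (last x p) ->
  exists a b, [/\ [set a; b] \in M, [set a;b] \in tE,
     connect (adj (tE :\ [set a; b])) x a &
     connect (adj (tE :\ [set a; b])) b (last x p)].
Proof.
elim: p x => [|y p IH] x /=; first by rewrite connect0.
move=> /andP[hxy hp] /andP[hx hu] hc.
case hM: ([set x; y] \in M).
  exists x, y; split => //.
  apply: (path_connect (p := p)); last exact: mem_last.
  apply: (sub_in_path (P := mem (y :: p))) hp; last by apply/allP.
  move=> u v hu' hv' huv; rewrite /adj in_setD1; rewrite /adj in huv; rewrite huv andbT.
  apply/negP => /eqP e.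
  have : x \in [set u; v] by rewrite e set21.
  rewrite !inE => /orP[] /eqP ex; move: hx; rewrite ex.
    by rewrite hu'.
  by rewrite hv'.
have hxy' : adj (tE :\: M) x y by rewrite /adj in_setD hM; exact: hxy.
have [a [b [h1 h2 h3 h4]]] : exists a b, [/\ [set a; b] \in M, [set a;b] \in tE,
     connect (adj (tE :\ [set a; b])) y a &
     connect (adj (tE :\ [set a; b])) b (last y p)].
  apply: IH => //; apply: contra hc => hc.
  exact: connect_trans (connect1 hxy') hc.
exists a, b; split => //.
apply: connect_trans h3; apply: connect1.
rewrite /adj in_setD1; rewrite /adj in hxy; rewrite hxy andbT; apply/negP => /eqP e.
by rewrite e h1 in hM.
Qed.

Lemma path_cross (N : finType) (Ed : {set {set N}}) (X : {set N}) x p :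
  path (adj Ed) x p -> x \in X -> last x p \notin X ->
  exists v w, [/\ adj Ed v w, v \in x :: p, w \in x :: p, v \in X & w \notin X].
Proof.
elim: p x => [|y p IH] x /=; first by move=> _ ->.
move=> /andP[hxy hp] hx hl.
case hy: (y \in X).
  have [v [w [h1 h2 h3 h4 h5]]] := IH y hp hy hl.
  by exists v, w; split => //; rewrite inE ?h2 ?h3 orbT.
by exists x, y; split => //; rewrite ?in_cons ?eqxx ?orbT ?hy.
Qed.

Definition compof (N : finType) (Ed : {set {set N}}) (e : {set N}) : {set N} :=
  if [pick u in e] is Some u then [set w | connect (adj Ed) u w] else set0.

Lemma comp_cross (N : finType) (E Ed : {set {set N}}) (X Q : {set N}) u1 u2 :
  Ed \subset E -> Q \in components Ed -> u1 \in Q -> u2 \in Q -> u1 \in X -> u2 \notin X ->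
  exists2 e, e \in ucut E X :&: Ed & compof Ed e = Q.
Proof.
move=> hsub hQ h1 h2 hx1 hx2.
have csym := sym_connect_sym (adj_sym Ed).
case/imsetP: hQ => u0 _ eQ; rewrite eQ inE in h1; rewrite eQ inE in h2.
have h10 : connect (adj Ed) u1 u0 by rewrite csym.
have c12 : connect (adj Ed) u1 u2 by rewrite (same_connect csym h10).
case/connectP: c12 => p hp el.
have hl : last u1 p \notin X by rewrite -el.
have [v [w [hvw hv hw hvX hwX]]] := path_cross hp hx1 hl.
have cv : connect (adj Ed) u0 v by apply: connect_trans h1 (path_connect hp hv).
have cw : connect (adj Ed) u0 w by apply: connect_trans h1 (path_connect hp hw).
have hvw' : [set v; w] \in Ed by exact: hvw.
have nvw : v != w by apply: contraNneq hwX => <-.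
exists [set v; w].
  rewrite inE hvw' andbT inE (subsetP hsub _ hvw') /=.
  have -> : [set v; w] :&: X = [set v].
    apply/setP => z; rewrite !inE; case: (z =P v) => [->|_] /=; first by rewrite hvX.
    by case: (z =P w) => [->|_]; rewrite ?andbF ?(negbTE hwX).
  by rewrite cards1.
rewrite /compof; case: pickP => [u hu|h0]; last by move: (h0 v); rewrite set21.
rewrite eQ; apply/setP => z; rewrite !inE.
have cu : connect (adj Ed) u0 u.
  by move: hu; rewrite !inE => /orP[] /eqP ->.
by rewrite -(same_connect csym cu).
Qed.

Lemma shattered_sep (V : finType) (E EH : {set {set V}}) (T : tree_emb V)
  (F : {set {set V}}) (Q : {set V}) :
  is_tree_emb E T -> EH \subset E -> Q \in shattered_comps EH T F ->
  exists2 f, f \in MinvF T F &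
    exists2 e, e \in ucut E (leaf_side f) :&: (EH :\: F) & compof (EH :\: F) e = Q.
Proof.
move=> hT hsub; rewrite inE => /andP[hQc /existsP[t1 /existsP[t2 /and5P[l1 l2 q1 q2 nc]]]].
case: hT => [[hT2 hTc hTb] hleaf hinj _].
have /connectP[p0 hp0 e2] := hTc t1 t2.
move: nc l2 q2; rewrite e2; case: (shortenP hp0) => p hp hu _ {e2 p0 hp0}.
set t2' := last t1 p => nc l2 q2.
have [a [b [hM htE ca cb]]] := tree_split hp hu nc.
have hbr := hTb _ a b htE erefl.
have csym := sym_connect_sym (adj_sym (tedges T :\ [set a; b])).
have hsub' : (EH :\: F) \subset E by apply: subset_trans (subsetDl _ _) hsub.
exists [set a; b] => //.
rewrite /leaf_side; case: pickP => [a' ha'|h0]; last by move: (h0 a); rewrite set21.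
set X := [set v | _].
have inX t : tleaf t -> (tmap t \in X) = connect (adj (tedges T :\ [set a; b])) a' t.
  move=> lt; rewrite inE; apply/existsP/idP => [[t' /and3P[lt' /eqP mt ct]] | ct].
    by rewrite -(hinj _ _ lt' lt mt).
  by exists t; rewrite lt eqxx ct.
move: ha'; rewrite !inE => /orP[] /eqP ea; subst a'.
  apply: (comp_cross (u1 := tmap t1) (u2 := tmap t2')) => //.
    by rewrite inX // csym.
  rewrite inX //; apply: contra hbr => ct.
  by apply: connect_trans ct _; rewrite csym.
apply: (comp_cross (u1 := tmap t2') (u2 := tmap t1)) => //.
  by rewrite inX.
rewrite inX //; apply: contra hbr => ct.
rewrite csym in ct; apply: connect_trans ct; by rewrite csym.
Qed.

Local Open Scope ring_scope.

Lemma sh_bound (R : realType) (V : finType) (E EH : {set {set V}}) (T : tree_emb V)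
  (F : {set {set V}}) (xt : {set V} -> R) (c : R) :
  is_tree_emb E T -> EH \subset E -> (forall e, e \in E -> 0 <= xt e) ->
  (forall e, e \in EH -> xt e = c) -> 0 <= c ->
  #|shattered_comps EH T F|%:R * c <= \sum_(f in MinvF T F) ty E xt f.
Proof.
move=> hT hsub hx hc c0.
pose A (f : {set tnode T}) := ucut E (leaf_side f) :&: (EH :\: F).
have hS : (#|shattered_comps EH T F| <= \sum_(f in MinvF T F) #|A f|)%N.
  apply: leq_trans (_ : #|\bigcup_(f in MinvF T F) (compof (EH :\: F) @: A f)| <= _)%N.
    apply: subset_leq_card; apply/subsetP => Q hQ.
    have [f hf [e he eQ]] := shattered_sep hT hsub hQ.
    by apply/bigcupP; exists f => //; apply/imsetP; exists e.
  apply: leq_trans (card_bigcup_le _ _) _.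
  by apply: leq_sum => f _; apply: leq_imset_card.
apply: le_trans (_ : (\sum_(f in MinvF T F) #|A f|)%:R * c <= _).
  by rewrite ler_wpM2r // ler_nat.
rewrite natr_sum mulr_suml; apply: ler_sum => f _.
rewrite /ty /xcut (big_setID (EH :\: F)) /=.
have -> : \sum_(i in ucut E (leaf_side f) :&: (EH :\: F)) xt i = #|A f|%:R * c.
  rewrite (eq_bigr (fun _ => c)); first by rewrite sumr_const mulr_natl.
  by move=> e; rewrite !inE => /andP[_ /andP[_ ?]]; apply: hc.
rewrite lerDl sumr_ge0 // => e; rewrite !inE => /andP[_ /andP[he _]]; exact: hx.
Qed.

End Helpers.

Local Open Scope ring_scope.

Theorem lemma5p10 (R : realType) (V : finType) (E : {set {set V}})
  (hE : forall e, e \in E -> #|e| = 2%N)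
  (q : nat) (S Tt : 'I_q -> {set V})
  (l : nat) (hl : (1 <= l)%N)
  (El : {set {set V}}) (hElE : El \subset E)
  (hEl : forall i, ell_edge_conn El (S i) (Tt i) l)
  (x : {set V} -> R)
  (hx01 : forall e, e \in E -> 0 <= x e <= 1)
  (hxEl : forall e, e \in El -> x e = 1)
  (hxcut : forall i (X : {set V}), Tt i \subset X -> X \subset ~: S i ->
             (l.+1)%:R <= \sum_(e in ucut E X) x e)
  (beta : R) (hbeta : 1 <= beta)
  (D : seq (R * tree_emb V))
  (hD : good_distribution E beta (xtilde E x l beta) D) :
  forall p, List.In p D -> 0 < p.1 ->
    (#|ZT E (xtilde E x l beta) (LARGE E x l beta) l S Tt p.2|)%:R
      <= q%:R * (#|V|%:R) ^+ (2 * l) * powR 2 (2 * l%:R * beta).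
Proof.
move=> p hp _.
case: hD => _ _ htree _ _.
have hT := htree p hp.
set T := p.2 in hT *.
set xt := xtilde E x l beta.
set EH := LARGE E x l beta.
set c := 1 / (4 * l%:R * beta).
have l0 : 0 < l%:R :> R by rewrite ltr0n.
have b0 : 0 < beta by apply: lt_le_trans hbeta.
have c0 : 0 < c by rewrite /c divr_gt0 // !mulr_gt0.
have hsub : EH \subset E by apply/subsetP => e; rewrite inE => /andP[].
have hxt0 : forall e, e \in E -> 0 <= xt e.
  move=> e he; rewrite /xt /xtilde; case: ifP => _; first exact: ltW.
  by case: ifP => _ //; case/andP: (hx01 e he).
have hxtc : forall e, e \in EH -> xt e = c by move=> e he; rewrite /xt /xtilde he.
set P0 := powR 2 (2 * l%:R * beta).
have hZF : forall F, good_for E xt T F -> (#|ZF EH S Tt T F|%:R <= q%:R * P0 :> R).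
  move=> F hg.
  set Sh := shattered_comps EH T F.
  have hsh := sh_bound F hT hsub hxt0 hxtc (ltW c0).
  have hSh : #|Sh|%:R <= 2 * l%:R * beta :> R.
    have h1 : #|Sh|%:R * c <= 1 / 2 := le_trans hsh hg.
    have k0 : 0 < 4 * l%:R * beta :> R by rewrite !mulr_gt0.
    have e : #|Sh|%:R = #|Sh|%:R * c * (4 * l%:R * beta) :> R.
      by rewrite -mulrA /c mul1r mulVf ?mulr1 // gt_eqF.
    rewrite e; apply: le_trans (ler_wpM2r (ltW k0) h1) _.
    by rewrite le_eqVlt; apply/orP; left; apply/eqP; field.
  apply: le_trans (_ : (2 ^ #|Sh| * q)%N%:R <= _).
    rewrite ler_nat /ZF; apply: leq_trans (card_imset2_le _ _ _) _.
    rewrite card_powerset leq_mul2l; apply/orP; right.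
    by apply: leq_trans (max_card _) _; rewrite card_ord.
  rewrite natrM mulrC ler_wpM2l // natrX -powR_mulrn ?ler0n //.
  by apply: ler_powR; rewrite ?ler1n.
pose PF := [set F in powerset EH | (#|F| == l) && good_for E xt T F].
apply: le_trans (_ : (\sum_(F | (F \in powerset EH) && ((#|F| == l) && good_for E xt T F)) #|ZF EH S Tt T F|)%N%:R <= _).
  by rewrite ler_nat; exact: card_bigcup_le.
rewrite natr_sum.
apply: le_trans (_ : \sum_(F | (F \in powerset EH) && ((#|F| == l) && good_for E xt T F)) (q%:R * P0) <= _).
  by apply: ler_sum => F /andP[_ /andP[_ hg]]; exact: hZF.
rewrite (eq_bigl (fun F => F \in PF)); last by move=> F; rewrite /PF in_set.
rewrite sumr_const -[_ *+ #|PF|]mulr_natr mulrAC ler_wpM2r ?powR_ge0 // ler_wpM2l ?ler0n //.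
rewrite -natrX ler_nat.
have hPF : (#|PF| <= 'C(#|EH|, l))%N.
  rewrite -cards_draws; apply: subset_leq_card; apply/subsetP => F.
  by rewrite !inE => /andP[-> /andP[-> _]].
apply: leq_trans hPF _.
have hEH : (#|EH| <= #|V| ^ 2)%N.
  apply: leq_trans (_ : #|[set A : {set V} | #|A| == 2%N]| <= _)%N.
    apply: subset_leq_card; apply/subsetP => e he; rewrite inE.
    by rewrite hE ?(subsetP hsub).
  by rewrite card_draws bin_le_exp.
apply: leq_trans (leq_bin2l _ hEH) _.
by rewrite expnM; apply: bin_le_exp.
Qed.
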